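(* Let $q=2^s$, $s\ge 1$, and let $C_2\subseteq C_1\subseteq\mathbb F_q^n$ be $\mathbb F_q$-linear codes. If $T^{\otimes n}$ maps $\mathrm{CSS}(C_1,C_2)$ into itself, then $(T^{(\lambda)})^{\otimes n}$ maps $\mathrm{CSS}(C_1,C_2)$ into itself for every $\lambda\in\mathbb F_q$.
   Context: Let $q=2^s$ and $\mathrm{tr}:\mathbb F_q\to\mathbb F_2$, $\mathrm{tr}(x)=\sum_{i=0}^{s-1}x^{2^i}$, the absolute trace. Let $\mathcal H=\mathbb C^q$ with orthonormal basis $\{|x\rangle:x\in\mathbb F_q\}$ and $\mathcal H^{\otimes n}$ with basis $|x\rangle=|x_1\rangle\otimes\cdots\otimes|x_n\rangle$, $x\in\mathbb F_q^n$. For $\lambda\in\mathbb F_q$, $T^{(\lambda)}=\sum_{x\in\mathbb F_q}e^{i\pi\,\mathrm{tr}(\lambda x)/4}|x\rangle\langle x|$, where $\mathrm{tr}(\lambda x)\in\{0,1\}$ is regarded as an integer; $T=T^{(1)}$. For $\mathbb F_q$-linear codes $C_2\subseteq C_1\subseteq\mathbb F_q^n$, the CSS code $\mathrm{CSS}(C_1,C_2)\subseteq\mathcal H^{\otimes n}$ is the complex linear span of the states $|w+C_2\rangle=|C_2|^{-1/2}\sum_{c\in C_2}|w+c\rangle$ for $w\in C_1$. *)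

(* Defs.v *)
From HB Require Import structures.
From mathcomp Require Import all_boot all_order all_algebra all_field.
Set Implicit Arguments. Unset Strict Implicit. Unset Printing Implicit Defensive.
Import Order.TTheory GRing.Theory Num.Theory.
Local Open Scope ring_scope.

(* Complex amplitudes are taken in algC (algebraic complex numbers);
   e^{i pi/4} = (1 + i)/sqrt 2 is algebraic. *)

Definition abs_trace (F : finFieldType) (s : nat) (x : F) : F :=
  \sum_(i < s) x ^+ (2 ^ i).

Definition omega8 : algC := (1 + 'i) / sqrtC 2%:R.

(* e^{i pi t / 4} for t = tr(.) in {0,1} regarded as an integer *)
Definition phase (F : finFieldType) (t : F) : algC :=
  if t == 0 then 1 else omega8.

(* states of H^{(x) n}: functions on the basis {|x> : x in F_q^n} *)
Definition state (F : finFieldType) (n : nat) := {ffun 'rV[F]_n -> algC}.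

Definition ket (F : finFieldType) (n : nat) (y : 'rV[F]_n) : state F n :=
  [ffun x => (x == y)%:R].

Definition Tlam_n (F : finFieldType) (s n : nat) (lam : F) (psi : state F n)
  : state F n :=
  [ffun x : 'rV[F]_n => (\prod_(i < n) phase (abs_trace s (lam * x ord0 i))) * psi x].

Definition coset_state (F : finFieldType) (n : nat)
  (C2 : {vspace 'rV[F]_n}) (w : 'rV[F]_n) : state F n :=
  [ffun x => (sqrtC (#|[set c : 'rV[F]_n | c \in C2]|%:R))^-1 *
    \sum_(c : 'rV[F]_n | c \in C2) ket (w + c) x].

Definition inCSS (F : finFieldType) (n : nat)
  (C1 C2 : {vspace 'rV[F]_n}) (psi : state F n) : Prop :=
  exists a : 'rV[F]_n -> algC,
    psi = [ffun x => \sum_(w : 'rV[F]_n | w \in C1) a w * coset_state C2 w x].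

(* Main.v *)
Require Import Defs.
From HB Require Import structures.
From mathcomp Require Import all_boot all_order all_algebra all_field.
Import GRing.Theory Num.Theory.
Local Open Scope ring_scope.

Definition Sc (F : finFieldType) (n : nat) (mu : F) (psi : state F n) : state F n :=
  [ffun x => psi (mu *: x)].
Arguments Sc {F n}.

Lemma memvZ_eq (F : finFieldType) (n : nat) (U : {vspace 'rV[F]_n}) (mu : F)
  (v : 'rV[F]_n) : mu != 0 -> (mu *: v \in U) = (v \in U).
Proof.
move=> mu0; apply/idP/idP => H; last exact: memvZ.
by rewrite -(scalerK mu0 v); apply: memvZ.
Qed.

Lemma reindexZ (F : finFieldType) (n : nat) (U : {vspace 'rV[F]_n}) (mu : F)
  (G : 'rV[F]_n -> algC) : mu != 0 ->
  \sum_(c : 'rV[F]_n | c \in U) G c = \sum_(c : 'rV[F]_n | c \in U) G (mu *: c).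
Proof.
move=> mu0.
rewrite (reindex (fun j : 'rV[F]_n => mu *: j)) /=.
  by apply: eq_bigl => c; rewrite memvZ_eq.
exists (fun j => mu^-1 *: j) => j _; [exact: scalerK | exact: scalerKV].
Qed.

Lemma cs_scale (F : finFieldType) (n : nat) (C2 : {vspace 'rV[F]_n}) (mu : F)
  (w x : 'rV[F]_n) : mu != 0 ->
  coset_state C2 (mu *: w) (mu *: x) = coset_state C2 w x.
Proof.
move=> mu0; rewrite !ffunE; congr (_ * _).
rewrite (@reindexZ _ _ C2 mu _ mu0); apply: eq_bigr => c _.
by rewrite !ffunE -scalerDr (inj_eq (scalerI mu0)).
Qed.

Lemma Sc_CSS (F : finFieldType) (n : nat) (C1 C2 : {vspace 'rV[F]_n}) (mu : F)
  (psi : state F n) : mu != 0 -> inCSS C1 C2 psi -> inCSS C1 C2 (Sc mu psi).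
Proof.
move=> mu0 [a ->]; exists (fun w => a (mu *: w)).
apply/ffunP => x; rewrite !ffunE (@reindexZ _ _ C1 mu _ mu0).
by apply: eq_bigr => w _; rewrite cs_scale.
Qed.

Theorem mainTheorem7 (s : nat) (hs : (1 <= s)%N) (F : finFieldType)
  (hF : #|F| = (2 ^ s)%N) (n : nat) (C1 C2 : {vspace 'rV[F]_n})
  (hC : (C2 <= C1)%VS) :
  (forall psi : state F n, inCSS C1 C2 psi -> inCSS C1 C2 (Tlam_n s 1 psi)) ->
  forall (lam : F) (psi : state F n),
    inCSS C1 C2 psi -> inCSS C1 C2 (Tlam_n s lam psi).
Proof.
move=> HT lam psi Hpsi.
have [->|lam0] := eqVneq lam 0.
  suff -> : Tlam_n s 0 psi = psi by [].
  apply/ffunP => x; rewrite ffunE big1 ?mul1r // => i _.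
  rewrite /phase /abs_trace mul0r.
  rewrite big1; first by rewrite eqxx.
  move=> j _; rewrite expr0n; case: (2 ^ j)%N (expn_gt0 2 j) => //.
have E : Tlam_n s lam psi = Sc lam (Tlam_n s 1 (Sc lam^-1 psi)).
  apply/ffunP => x; rewrite !ffunE scalerA mulVf // scale1r.
  congr (_ * _); apply: eq_bigr => i _; by rewrite mul1r mxE.
rewrite E; apply: Sc_CSS => //; apply: HT; apply: Sc_CSS => //.
by rewrite invr_eq0.
Qed.
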